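(* Let $K$ be a field of characteristic $0$, $n\ge2$, and let $f=\sum_{i_1,\dots,i_n\ge0}a_{i_1,\dots,i_n}x_1^{i_1}\cdots x_n^{i_n}\in K[[x_1,\dots,x_n]]$ (not necessarily D-finite). Define $$\sigma(f)=\frac{1}{s_1\cdots s_{n-1}}\,f\Bigl(s_1,\frac{s_2}{s_1},\frac{s_3}{s_2},\dots,\frac{s_{n-1}}{s_{n-2}},\frac{t}{s_{n-1}}\Bigr),$$ a formal series in $s_1,\dots,s_{n-1}$ (integer exponents) and $t$ (non-negative exponents). Fix any lexicographical order on monomials in $D_{s_1},\dots,D_{s_{n-1}}$. Let $P\in(K[t]\langle D_t\rangle)[D_{s_1},\dots,D_{s_{n-1}}]$ be non-zero, let $D_{s_1}^{\alpha_1}\cdots D_{s_{n-1}}^{\alpha_{n-1}}$ be the smallest monomial occurring in $P$ with non-zero coefficient, and write $P=\tilde P(t;D_t)D_{s_1}^{\alpha_1}\cdots D_{s_{n-1}}^{\alpha_{n-1}}+(\text{terms with higher monomials})$ with $\tilde P\in K[t]\langle D_t\rangle$ non-zero. If $P(\sigma(f))=0$, then $\tilde P$ annihilates the complete diagonal $\Delta(f)=\sum_{i\ge0}a_{i,\dots,i}t^i$.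
   Context: Operators act on series in $s_1,\dots,s_{n-1},t$ by multiplication by $t$ and termwise differentiation $D_t=\partial/\partial t$, $D_{s_i}=\partial/\partial s_i$; coefficients in $K[t]\langle D_t\rangle$ are written to the left of monomials in the $D_{s_i}$. *)

(* Defs.v *)
From HB Require Import structures.
From mathcomp Require Import all_boot all_order all_algebra all_fingroup.
From mathcomp Require Import mpoly.
Set Implicit Arguments. Unset Strict Implicit. Unset Printing Implicit Defensive.
Import Order.TTheory GRing.Theory Num.Theory.
Local Open Scope ring_scope.

(* Formal series in variables indexed by an exponent type E (exponents of
   s_1..s_{k}) and t (nat exponents), represented by their coefficient
   function: g e m = coefficient of s^e t^m. *)
Definition series (K : Type) (E : Type) := E -> nat -> K.

Section Ops.
Variable K : fieldType.
Variable E : Type.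

Definition tmul (g : series K E) : series K E :=
  fun e m => if m is m'.+1 then g e m' else 0.

Definition dt (g : series K E) : series K E :=
  fun e m => m.+1%:R * g e m.+1.

Definition polyt_act (p : {poly K}) (g : series K E) : series K E :=
  fun e m => \sum_(a < size p) p`_a * iter a tmul g e m.

(* Elements of K[t]<D_t> are represented in normal form
   w = sum_b (w`_b)(t) D_t^b  (coefficients to the left), as w : {poly {poly K}}. *)
Definition weyl_act (w : {poly {poly K}}) (g : series K E) : series K E :=
  fun e m => \sum_(b < size w) polyt_act w`_b (iter b dt g) e m.
End Ops.

Section SOps.
Variable K : fieldType.
Variable k : nat.

Definition shift (e : 'I_k -> int) (i : 'I_k) : 'I_k -> int :=
  fun j => if j == i then e j + 1 else e j.

Definition Ds (i : 'I_k) (g : series K ('I_k -> int)) : series K ('I_k -> int) :=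
  fun e m => (e i + 1)%:~R * g (shift e i) m.

Definition Dmono (al : 'X_{1..k}) (g : series K ('I_k -> int)) :
    series K ('I_k -> int) :=
  foldr (fun i h => iter (al i) (Ds i) h) g (enum 'I_k).

(* action of P in (K[t]<D_t>)[D_{s_1},...,D_{s_k}], coefficients written to
   the left of the D_s-monomials *)
Definition op_act (P : {mpoly {poly {poly K}}[k]}) (g : series K ('I_k -> int)) :
    series K ('I_k -> int) :=
  fun e m => \sum_(al <- msupp P) weyl_act (mcoeff al P) (Dmono al g) e m.

(* lexicographic order on monomials w.r.t. the variable ordering given by pi *)
Definition lexlt (pi : {perm 'I_k}) (a b : 'X_{1..k}) : bool :=
  [exists j : 'I_k, (a (pi j) < b (pi j))%N &&
     [forall l : 'I_k, (l < j)%N ==> (a (pi l) == b (pi l))]].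
End SOps.

Definition sigma (K : fieldType) (n : nat) (a : ('I_n -> nat) -> K) :
    series K ('I_n.-1 -> int) :=
  fun e m =>
    let idx := fun j : 'I_n =>
      (m%:Z + \sum_(l < n.-1 | (j <= l)%N) (e l + 1))%R in
    if [forall j, (0 <= idx j)%R] then a (fun j => `|idx j|%N) else 0.

(* complete diagonal, as a series in t (trivial s-exponent type unit) *)
Definition diag (K : fieldType) (n : nat) (a : ('I_n -> nat) -> K) :
    series K unit :=
  fun _ m => a (fun _ => m).

(* Main.v *)
Require Import Defs.
From HB Require Import structures.
From mathcomp Require Import all_boot all_order all_algebra all_fingroup.
From mathcomp Require Import mpoly.
From mathcomp Require Import zify ring.
From Stdlib Require Import FunctionalExtensionality.
Local Open Scope ring_scope.
Import GRing.Theory.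

Section Aux.
Variable K : fieldType.

Lemma iter_tmul_scale E1 E2 (G : series K E1) (H : series K E2) e e' (c : K) :
  (forall m, G e m = c * H e' m) -> forall a m, iter a (@tmul K _) G e m = c * iter a (@tmul K _) H e' m.
Proof.
move=> GH; elim=> [|a IH] m /=; first exact: GH.
by case: m => [|m]; rewrite /tmul ?mulr0 // IH.
Qed.

Lemma iter_dt_scale E1 E2 (G : series K E1) (H : series K E2) e e' (c : K) :
  (forall m, G e m = c * H e' m) -> forall b m, iter b (@dt K _) G e m = c * iter b (@dt K _) H e' m.
Proof.
move=> GH; elim=> [|b IH] m /=; first exact: GH.
by rewrite /dt IH mulrCA.
Qed.

Lemma weyl_scale E1 E2 w (G : series K E1) (H : series K E2) e e' (c : K) :
  (forall m, G e m = c * H e' m) -> forall m, weyl_act w G e m = c * weyl_act w H e' m.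
Proof.
move=> GH m; rewrite /weyl_act mulr_sumr; apply: eq_bigr => b _.
rewrite /polyt_act mulr_sumr; apply: eq_bigr => i _.
by rewrite (@iter_tmul_scale _ _ _ _ _ _ _ (@iter_dt_scale _ _ _ _ _ _ _ GH b)) mulrCA.
Qed.

Variable k : nat.

Definition shk (e : 'I_k -> int) i (d : nat) : 'I_k -> int :=
  fun j => if j == i then e j + d%:Z else e j.
Definition fac (e : 'I_k -> int) i d : K := \prod_(l < d) ((e i + 1 + l%:Z)%:~R).

Lemma iter_Ds i d (g : series K ('I_k -> int)) e m :
  iter d (@Ds K k i) g e m = fac e i d * g (shk e i d) m.
Proof.
elim: d e => [|d IH] e /=.
  rewrite /fac big_ord0 mul1r; congr g; apply: functional_extensionality => j.
  by rewrite /shk; case: (_ == _); rewrite ?addr0.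
rewrite /Ds IH /fac big_ord_recl mulrA.
congr (_ * _ * _).
- by rewrite addr0.
- apply: eq_bigr => l _; rewrite /shift eqxx /bump /=; congr intmul; rewrite /bump leq0n /= add1n; lia.
- apply: (congr1 (fun x => g x m)); apply: functional_extensionality => j; rewrite /shk /shift.
  case: eqP => [->|] //; lia.
Qed.

Lemma foldr_Ds (be : 'X_{1..k}) (g : series K ('I_k -> int)) (s : seq 'I_k) :
  uniq s -> forall e m,
  foldr (fun i h => iter (be i) (@Ds K k i) h) g s e m =
  (\prod_(i <- s) fac e i (be i)) * g (fun j => if j \in s then e j + (be j)%:Z else e j) m.
Proof.
elim: s => [|i s IH] /= => [_|/andP [nis us]] e m.
  by rewrite big_nil mul1r.
rewrite iter_Ds IH // big_cons mulrA; congr (_ * _ * _).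
  apply: eq_big_seq => j js.
  have ji : j != i by apply: contraNneq nis => <-.
  by rewrite /fac /shk (negbTE ji).
apply: (congr1 (fun x => g x m)).
apply: functional_extensionality => j; rewrite /shk in_cons.
case: (eqVneq j i) => [->|ji] /=; first by rewrite (negbTE nis).
by [].
Qed.

Lemma Dmono_eq (be : 'X_{1..k}) (g : series K ('I_k -> int)) e m :
  Dmono be g e m = (\prod_(i <- enum 'I_k) fac e i (be i)) * g (fun j => e j + (be j)%:Z) m.
Proof.
rewrite /Dmono foldr_Ds ?enum_uniq //; congr (_ * _); apply: (congr1 (fun x => g x m)).
by apply: functional_extensionality => j; rewrite mem_enum.
Qed.

End Aux.

Theorem lemma4p14 (K : fieldType) (n : nat) (a : ('I_n -> nat) -> K)
    (pi : {perm 'I_n.-1}) (P : {mpoly {poly {poly K}}[n.-1]})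
    (al : 'X_{1..n.-1}) :
  [pchar K] =i pred0 ->
  (2 <= n)%N ->
  P != 0 ->
  al \in msupp P ->
  (forall be, be \in msupp P -> be != al -> lexlt pi al be) ->
  (forall e m, op_act P (sigma a) e m = 0) ->
  forall u m, weyl_act (mcoeff al P) (diag a) u m = 0.
Proof.
move=> ch0 _ _ alP lex Hz u m.
pose e0 := fun j : 'I_n.-1 => - (al j)%:Z - 1.
have H0 := Hz e0 m.
rewrite /op_act (bigD1_seq al) ?msupp_uniq //= big1_seq in H0; last first.
  move=> be /andP [bal beP].
  rewrite (@weyl_scale K _ _ (mcoeff be P) (Dmono be (sigma a)) (Dmono be (sigma a)) e0 e0 0); first by rewrite mul0r.
  move=> m'; rewrite mul0r Dmono_eq.
  have /existsP [j /andP [ltj _]] := lex be beP bal.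
  rewrite (bigD1_seq (pi j)) ?mem_enum ?enum_uniq //= /fac.
  rewrite (bigD1 (Ordinal ltj)) //=.
  have -> : e0 (pi j) + 1 + (al (pi j))%:Z = 0 by rewrite /e0; lia.
  by rewrite mul0r !mul0r.
set C := \prod_(i <- enum 'I_n.-1) fac K n.-1 e0 i (al i).
rewrite (@weyl_scale K _ _ (mcoeff al P) (Dmono al (sigma a)) (diag a) e0 u C) in H0; last first.
  move=> m'; rewrite Dmono_eq /sigma /diag /=.
  have Hid : forall j : 'I_n, (m'%:Z + \sum_(l < n.-1 | (j <= l)%N) (e0 l + (al l)%:Z + 1)) = m'%:Z.
    move=> j; rewrite big1 ?addr0 // => l _; rewrite /e0; lia.
  case: ifP => [_|/negP[]]; last by apply/forallP => j; rewrite Hid.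
  congr (C * a _); apply: functional_extensionality => j; by rewrite Hid.
suff CN : C != 0.
  by move: H0; rewrite addr0 => /eqP; rewrite mulf_eq0 (negbTE CN) /= => /eqP.
rewrite /C prodf_seq_neq0.
apply/allP => i _; rewrite /fac prodf_seq_neq0; apply/allP => l _ /=.
have ltl := ltn_ord l.
have -> : e0 i + 1 + (l : nat)%:Z = - ((al i - l)%N%:Z) by rewrite /e0; lia.
rewrite intrN oppr_eq0.
have -> : ((al i - l)%N%:Z)%:~R = (al i - l)%:R :> K by [].
by rewrite (pcharf0P K).1 // subn_eq0 -ltnNge.
Qed.
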